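(* Let $2/5 < r < 1$, put $p = \left\lceil \frac{5r-2}{1-r} \right\rceil$ and $\alpha = p - \frac{5r-2}{1-r}$, and let $\alpha = (0.\alpha_1 \alpha_2 \cdots)_2$ be the binary expansion of $\alpha$ with infinitely many zero digits. Define binary words $w^{\langle 0 \rangle} = \emptyset$ and $w^{\langle i \rangle} = w^{\langle i-1 \rangle} w^{\langle i-1 \rangle}\, 01011\, 0^{p - \alpha_i}$ for $i \geq 1$; each $w^{\langle i \rangle}$ is a proper prefix of $w^{\langle i+1 \rangle}$, and let $w$ be the infinite binary word which is the limit of this sequence. Then $\lim_{n \to \infty} |P(w^{(n)})|/n = (5r-2)/3$.
   Context: For a binary word $x$, $x^j$ denotes $j$ concatenated copies of $x$ ($x^0$ is empty), and juxtaposition denotes concatenation. $w^{(n)}$ denotes the initial subword of length $n$ of $w$. For a binary word $u = u_1 \cdots u_\ell$ of length $\ell$, $P(u)$ is the set of indices $i \geq 2$ such that at least one of the following holds: (i) $\ell \geq i$ and $u_{i-1} u_i = 00$; (ii) $\ell \geq i+2$ and $u_{i-1} u_i u_{i+1} u_{i+2} = 0100$; (iii) $\ell \geq i+3$ and $u_{i-1} \cdots u_{i+3} = 01010$. *)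

(* Defs.v *)
From HB Require Import structures.
From mathcomp Require Import all_boot all_order all_algebra.
From mathcomp Require Import all_classical all_reals all_analysis.
Set Implicit Arguments. Unset Strict Implicit. Unset Printing Implicit Defensive.
Import Order.TTheory GRing.Theory Num.Theory.
Local Open Scope ring_scope.

(* Binary words are sequences of naturals over {0,1}.  Letters are
   1-indexed as in the paper: u_k = nth 0 u (k-1). *)
Definition letter (u : seq nat) (k : nat) : nat := nth 0%N u k.-1.

Definition inP (u : seq nat) (i : nat) : bool :=
  let l := size u in
  [&& (2 <= i)%N &
   [|| ((i <= l)%N && (letter u i.-1 == 0%N) && (letter u i == 0%N)),
       [&& (i + 2 <= l)%N, letter u i.-1 == 0%N, letter u i == 1%N,
           letter u i.+1 == 0%N & letter u i.+2 == 0%N]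
     | [&& (i + 3 <= l)%N, letter u i.-1 == 0%N, letter u i == 1%N,
           letter u i.+1 == 0%N, letter u i.+2 == 1%N & letter u i.+3 == 0%N]]].

(* |P(u)|: all elements of P(u) lie in {2, ..., l}. *)
Definition cardP (u : seq nat) : nat := count (inP u) (iota 2 (size u).-1).

Section Construction.
Variables (R : realType) (r : R).

Definition pp : int := Num.ceil ((5 * r - 2) / (1 - r)).

Definition alpha : R := pp%:~R - (5 * r - 2) / (1 - r).

(* i-th binary digit (i >= 1) of the expansion of alpha in [0,1) with
   infinitely many zeros: alpha_i = floor(2^i alpha) mod 2. *)
Definition alpha_digit (i : nat) : int := ((Num.floor (2 ^+ i * alpha)) %% 2)%Z.

Fixpoint wblock (i : nat) : seq nat :=
  match i with
  | 0 => [::]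
  | i'.+1 => wblock i' ++ wblock i' ++ [:: 0; 1; 0; 1; 1]%N
             ++ nseq `|pp - alpha_digit i|%N 0%N
  end.

(* The infinite limit word: its n-th letter (0-indexed) is read off
   w^<n+1>, which has length > n and is a prefix of all later w^<j>. *)
Definition winf (n : nat) : nat := nth 0%N (wblock n.+1) n.

Definition wprefix (n : nat) : seq nat := mkseq winf n.

End Construction.

(* Main.v *)
Require Import Defs.
From HB Require Import structures.
From mathcomp Require Import all_boot all_order all_algebra.
From mathcomp Require Import all_classical all_reals all_analysis.
From mathcomp Require Import zify ring lra.
From Stdlib Require Import Lia.
Import Order.TTheory GRing.Theory Num.Theory.
Import numFieldNormedType.Exports.
Local Open Scope ring_scope.
Local Open Scope classical_set_scope.
Set Implicit Arguments. Unset Strict Implicit.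

Definition pat (s : seq nat) : bool :=
  match s with
  | 0 :: 0 :: _ => true
  | 0 :: 1 :: 0 :: 0 :: _ => true
  | 0 :: 1 :: 0 :: 1 :: 0 :: _ => true
  | _ => false
  end%N.

Fixpoint gcount (u c : seq nat) : nat :=
  match u with
  | [::] => 0%N
  | a :: u' => (pat (a :: u' ++ c) + gcount u' c)%N
  end.

Lemma gcount_cat u v c : gcount (u ++ v) c = (gcount u (v ++ c) + gcount v c)%N.
Proof. elim: u => [|a u IH] //=; by rewrite IH catA addnA. Qed.

Lemma gcount_le u c : (gcount u c <= size u)%N.
Proof. elim: u => [|a u IH] //=; by rewrite -add1n leq_add // leq_b1. Qed.

Ltac dpat t := case: t => [|[|[|?]] [|[|[|?]] [|[|[|?]] [|[|[|?]] [|[|[|?]] ?]]]]].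

Lemma pat_mono t c : pat t -> pat (t ++ c).
Proof. by dpat t. Qed.

Lemma pat_long t c : (5 <= size t)%N -> pat (t ++ c) = pat t.
Proof. by dpat t. Qed.

Lemma gcount_cons a u c : gcount (a :: u) c = (pat (a :: u ++ c) + gcount u c)%N.
Proof. by []. Qed.

Lemma gcount_nil_le u c : (gcount u [::] <= gcount u c)%N.
Proof.
elim: u => [|a u IH] //; rewrite !gcount_cons cats0 leq_add //.
case E: (pat (a :: u)) => //.
by rewrite -cat_cons (@pat_mono (a :: u) c E).
Qed.

Lemma gcount_le4 u c : (gcount u c <= gcount u [::] + 4)%N.
Proof.
elim: u => [|a u IH] //; rewrite !gcount_cons cats0.
case: (leqP 4 (size u)) => H.
  by rewrite -cat_cons pat_long // -addnA leq_add2l.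
apply: leq_trans (@gcount_le (a :: u) c) _; apply: leq_trans H _; exact: leq_addl.
Qed.

Lemma inP2 u : inP u 2 = pat u.
Proof. rewrite /inP /letter; by dpat u. Qed.

Lemma inP_cons a u i : (2 <= i)%N -> inP (a :: u) i.+1 = inP u i.
Proof.
by case: i => [|[|i]].
Qed.

Lemma inP_drop s u : inP u s.+2 = pat (drop s u).
Proof.
elim: s u => [|s IH] u; first by rewrite drop0 inP2.
case: u => [|a u] //.
by rewrite inP_cons // IH.
Qed.

Lemma cardP_gcount u : cardP u = gcount u [::].
Proof.
have H : forall u, gcount u [::] = count (fun s => pat (drop s u)) (iota 0 (size u)).
  elim=> [|a v IH] //; rewrite gcount_cons cats0 /= IH.
  by rewrite -[1%N]addn0 iotaDl count_map.
rewrite /cardP H.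
case: u => [|a v] //.
have -> : iota 2 (size (a :: v)).-1 = map (addn 2) (iota 0 (size v)) by rewrite -iotaDl.
rewrite count_map (_ : size (a :: v) = size v + 1)%N; last by rewrite addn1.
rewrite iotaD count_cat add0n.
have -> : count (fun s => pat (drop s (a :: v))) [:: size v] = 0%N.
  rewrite /= -/(drop (size v) (a :: v)).
  have : size (drop (size v) (a :: v)) = 1%N by rewrite size_drop /= subSnn.
  by case: (drop _ _) => [|x [|y t]] //= _; case: x => [|[|x]].
rewrite addn0; apply: eq_count => s /=.
by rewrite add2n inP_drop.
Qed.

Definition Tw (k : nat) : seq nat := [:: 0; 1; 0; 1; 1]%N ++ nseq k 0%N.
Definition kd (R : realType) (r : R) (j : nat) : nat := `|pp r - alpha_digit r j|%N.

Lemma wblockS (R : realType) (r : R) j :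
  wblock r j.+1 = wblock r j ++ wblock r j ++ Tw (kd r j.+1).
Proof. by []. Qed.

Lemma startA (R : realType) (r : R) j Z :
  exists Y, wblock r j ++ [:: 0, 1, 0, 1 & Z]%N = [:: 0, 1, 0, 1 & Y]%N.
Proof.
elim: j Z => [|j IH] Z; first by exists Z.
rewrite wblockS -!catA /=.
have [Y1 ->] := IH (1%N :: nseq (kd r j.+1) 0%N ++ [:: 0, 1, 0, 1 & Z]%N).
exact: IH.
Qed.

Lemma gcount_T k Z : gcount (Tw k) (0%N :: Z) = k.
Proof.
rewrite /Tw gcount_cat.
have -> : gcount [:: 0; 1; 0; 1; 1]%N (nseq k 0%N ++ 0%N :: Z) = 0%N by [].
rewrite add0n; elim: k => [|k IH] //.
by rewrite /= IH; case: k {IH}.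
Qed.

Fixpoint cnt (R : realType) (r : R) (j : nat) : nat :=
  match j with 0 => 0%N | j'.+1 => (2 * cnt r j' + kd r j'.+1)%N end.

Lemma gcount_block (R : realType) (r : R) j Y :
  gcount (wblock r j) [:: 0, 1, 0, 1 & Y]%N = cnt r j.
Proof.
elim: j Y => [|j IH] Y //.
rewrite wblockS gcount_cat gcount_cat -!catA.
have [Y1 ->] := startA r j (1%N :: nseq (kd r j.+1) 0%N ++ [:: 0, 1, 0, 1 & Y]%N).
rewrite IH (_ : [:: 0; 1; 0; 1; 1] ++ nseq (kd r j.+1) 0 ++ [:: 0, 1, 0, 1 & Y] = [:: 0, 1, 0, 1 & (1 :: nseq (kd r j.+1) 0 ++ [:: 0, 1, 0, 1 & Y])])%N //.
by rewrite IH gcount_T /= mul2n -addnn addnA.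
Qed.

Lemma size_blockS (R : realType) (r : R) j :
  size (wblock r j.+1) = (2 * size (wblock r j) + 5 + kd r j.+1)%N.
Proof. by rewrite wblockS !size_cat size_nseq /= mul2n -addnn !addnA. Qed.

Lemma size_block_ge (R : realType) (r : R) j : (j <= size (wblock r j))%N.
Proof.
elim: j => [|j IH] //; rewrite size_blockS.
lia.
Qed.

Lemma block_prefix (R : realType) (r : R) j m :
  (j <= m)%N -> exists S, wblock r m = wblock r j ++ S.
Proof.
move=> /subnK <-; elim: (m - j)%N => [|d [S IH]]; first by exists [::]; rewrite cats0.
rewrite addSn wblockS IH -catA; by eexists.
Qed.

Lemma wprefix_take (R : realType) (r : R) n : wprefix r n = take n (wblock r n).
Proof.
apply: (@eq_from_nth _ 0%N).
  by rewrite size_mkseq size_take_min; apply/esym/minn_idPl/size_block_ge.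
move=> i; rewrite size_mkseq => Hi.
rewrite nth_mkseq // nth_take // /winf.
have [S ->] := block_prefix r Hi.
rewrite nth_cat.
by have -> : (i < size (wblock r i.+1))%N by apply: size_block_ge.
Qed.

Lemma floor2 (R : realType) (y : R) :
  Num.floor (2 * y) = 2 * Num.floor y + ((Num.floor (2 * y)) %% 2)%Z /\
  0 <= ((Num.floor (2 * y)) %% 2)%Z <= 1.
Proof.
set a := Num.floor y; set c := Num.floor (2 * y).
have h1 : 2 * a <= c.
  rewrite /c floor_ge_int rmorphM /=.
  have := floor_le y; rewrite -/a => h; lra.
have h2 : c < 2 * a + 2.
  rewrite /c floor_lt_int rmorphD rmorphM /=.
  have := floorD1_gt y; rewrite -/a rmorphD /= => h; lra.
have -> : (c %% 2)%Z = c - 2 * a.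
  rewrite {1}(_ : c = a * 2 + (c - 2 * a)); last by ring.
  rewrite modzMDl modz_small //.
  apply/andP; split; lia.
split; [ring | lia].
Qed.

Lemma x_pos (R : realType) (r : R) : 2 / 5 < r -> r < 1 -> 0 < (5 * r - 2) / (1 - r).
Proof. move=> h1 h2; apply: divr_gt0; lra. Qed.

Lemma alpha_bounds (R : realType) (r : R) : 0 <= alpha r < 1.
Proof.
rewrite /alpha /pp; have := ceil_itv ((5 * r - 2) / (1 - r)).
rewrite rmorphB /=; set c := _%:~R; set x := _ / _ => /andP[h1 h2].
apply/andP; split; lra.
Qed.

Lemma pp_ge1 (R : realType) (r : R) : 2 / 5 < r -> r < 1 -> 1 <= pp r.
Proof.
move=> h1 h2; have : 0 < pp r by rewrite /pp ceil_gt0 x_pos.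
lia.
Qed.

Lemma digit01 (R : realType) (r : R) j : 0 <= alpha_digit r j <= 1.
Proof.
rewrite /alpha_digit modz_ge0 //=.
by rewrite -ltzD1; apply: ltz_pmod.
Qed.

Lemma kd_eq (R : realType) (r : R) j : 2 / 5 < r -> r < 1 ->
  (kd r j)%:R = (pp r)%:~R - (alpha_digit r j)%:~R :> R.
Proof.
move=> h1 h2; rewrite /kd -rmorphB /=.
have := pp_ge1 h1 h2; have := digit01 r j.
move=> /andP[? ?] ?; rewrite -[X in _ = X%:~R]gez0_abs //; lia.
Qed.

Definition Fl (R : realType) (r : R) j := Num.floor (2 ^+ j * alpha r).

Lemma Fl_S (R : realType) (r : R) j : Fl r j.+1 = 2 * Fl r j + alpha_digit r j.+1.
Proof.
rewrite /Fl /alpha_digit exprS -mulrA.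
by have [E _] := floor2 (2 ^+ j * alpha r); rewrite {1}E.
Qed.

Lemma Fl0 (R : realType) (r : R) : Fl r 0 = 0.
Proof.
rewrite /Fl expr0 mul1r; apply: floor_def; rewrite add0r /=.
by have := alpha_bounds r; rewrite ?lexx.
Qed.

Lemma Fl_bounds (R : realType) (r : R) j :
  (Fl r j)%:~R <= 2 ^+ j * alpha r < (Fl r j)%:~R + 1.
Proof.
rewrite /Fl floor_le /=; have := floorD1_gt (2 ^+ j * alpha r).
by rewrite rmorphD.
Qed.

Lemma cnt_eq (R : realType) (r : R) j : 2 / 5 < r -> r < 1 ->
  (cnt r j)%:R = (pp r)%:~R * (2 ^+ j - 1) - (Fl r j)%:~R :> R.
Proof.
move=> h1 h2; elim: j => [|j IH]; first by rewrite Fl0 /= expr0 subrr mulr0 subr0.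
rewrite (_ : cnt r j.+1 = 2 * cnt r j + kd r j.+1)%N // natrD natrM IH Fl_S (intrD _ (2 * Fl r j)) intrM kd_eq // exprS; ring.
Qed.

Lemma size_eq (R : realType) (r : R) j : 2 / 5 < r -> r < 1 ->
  (size (wblock r j))%:R = (5 + (pp r)%:~R) * (2 ^+ j - 1) - (Fl r j)%:~R :> R.
Proof.
move=> h1 h2; elim: j => [|j IH]; first by rewrite Fl0 /= expr0 subrr mulr0 subr0.
rewrite size_blockS natrD (natrD _ (2 * _)%N) natrM IH Fl_S (intrD _ (2 * Fl r j)) intrM kd_eq // exprS; ring.
Qed.

Lemma cnt_dev (R : realType) (r : R) j : 2 / 5 < r -> r < 1 ->
  `|(cnt r j)%:R - (5 * r - 2) / 3 * (size (wblock r j))%:R| <= 1 :> R.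
Proof.
move=> h1 h2; rewrite cnt_eq // size_eq //.
have := Fl_bounds r j; have := alpha_bounds r.
rewrite /alpha; set x := (5 * r - 2) / (1 - r).
set P := (pp r)%:~R; set F := (Fl r j)%:~R; set A := 2 ^+ j.
move=> /andP[a1 a2] /andP[f1 f2].
have hx : x * (1 - r) = 5 * r - 2 by rewrite /x mulfVK //; lra.
have E : P * (A - 1) - F - (5 * r - 2) / 3 * ((5 + P) * (A - 1) - F)
   = (1 - (5 * r - 2) / 3) * ((A - 1) * (P - x) - F).
  rewrite -hx; rewrite /x; field; lra.
rewrite E ler_norml; apply/andP; split; nra.
Qed.

Lemma lg_step m n : (2 <= n)%N -> (2 * m <= n)%N -> (trunc_log 2 m < trunc_log 2 n)%N.
Proof.
move=> h2 hm.
case: m hm => [|m] hm.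
  by rewrite trunc_log0; apply: (@trunc_log_max 2 n 1).
apply: trunc_log_max => //.
rewrite expnS; apply: leq_trans hm; rewrite leq_mul2l /=.
exact: trunc_logP.
Qed.

Lemma size_block01 (R : realType) (r : R) j :
  size (wblock r j) = 0%N \/ (5 <= size (wblock r j))%N.
Proof. case: j => [|j]; [by left | right; rewrite size_blockS; lia]. Qed.

Lemma kd_le (R : realType) (r : R) j : 2 / 5 < r -> r < 1 ->
  (kd r j)%:R <= (pp r)%:~R :> R.
Proof.
move=> h1 h2; rewrite kd_eq //; have := digit01 r j => /andP[d0 _].
by rewrite lerBlDr lerDl ler0z.
Qed.

Lemma TZ k Z : Tw k ++ Z = [:: 0, 1, 0, 1 & 1 :: nseq k 0 ++ Z]%N.
Proof. by []. Qed.

Lemma TZ' k Z : [:: 0; 1; 0; 1; 1] ++ nseq k 0 ++ Z = [:: 0, 1, 0, 1 & 1 :: nseq k 0 ++ Z]%N.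
Proof. by []. Qed.

Lemma startWT (R : realType) (r : R) j k Z :
  exists Y, wblock r j ++ Tw k ++ Z = [:: 0, 1, 0, 1 & Y]%N.
Proof. by rewrite TZ; apply: startA. Qed.

Lemma main_dev (R : realType) (r : R) j : 2 / 5 < r -> r < 1 ->
  forall n Y, (n <= size (wblock r j))%N ->
  `|(gcount (take n (wblock r j)) (drop n (wblock r j) ++ [:: 0, 1, 0, 1 & Y]%N))%:R
     - (5 * r - 2) / 3 * n%:R|
   <= (7 + (pp r)%:~R) * (1 + trunc_log 2 n)%:R :> R.
Proof.
move=> h1 h2.
have hp : 1 <= (pp r)%:~R :> R by rewrite ler1z; exact: pp_ge1.
have hrho0 : 0 <= (5 * r - 2) / 3 :> R by apply: divr_ge0; lra.
have hrho1 : (5 * r - 2) / 3 <= 1 :> R by rewrite ler_pdivrMr; lra.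
elim: j => [|j IH] n Y.
  rewrite leqn0 => /eqP ->; rewrite /= mulr0 subr0 normr0.
  by apply: mulr_ge0; [lra | rewrite ler0n].
set W := wblock r j; set T := Tw (kd r j.+1); set Z := [:: 0, 1, 0, 1 & Y]%N.
rewrite wblockS -/W -/T => Hn.
have hlg0 : 0 <= (trunc_log 2 n)%:R :> R by rewrite ler0n.
case: (ltnP n (size W)) => H1.
  rewrite take_cat drop_cat H1 -!catA.
  have [Y1 ->] := startWT r j (kd r j.+1) Z.
  exact: IH (ltnW H1).
have HL := size_block01 r j; rewrite -/W in HL.
have hK : 1 <= 7 + (pp r)%:~R :> R by lra.
have hc := cnt_dev j h1 h2; rewrite -/W in hc.
have sT : size T = (5 + kd r j.+1)%N by rewrite /T /Tw size_cat size_nseq.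
case: (ltnP n (2 * size W)) => H2.
  have Hm : (n - size W < size W)%N by lia.
  rewrite take_cat drop_cat ltnNge H1 /= take_cat drop_cat Hm.
  set m := (n - size W)%N in Hm *.
  rewrite -catA gcount_cat -catA catA cat_take_drop.
  have [Y1 ->] := startWT r j (kd r j.+1) Z.
  rewrite gcount_block TZ'.
  have IHm := IH m (1%N :: nseq (kd r j.+1) 0%N ++ Z) (ltnW Hm).
  set G := gcount _ _ in IHm *.
  have lgs : (trunc_log 2 m < trunc_log 2 n)%N by apply: lg_step; lia.
  have Hl : (1 + trunc_log 2 m)%:R + 1 <= (1 + trunc_log 2 n)%:R :> R.
    by rewrite natr1 ler_nat; lia.
  have En : n%:R = (size W)%:R + m%:R :> R by rewrite -natrD; congr (_%:R); lia.
  rewrite natrD En.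
  set c := (cnt r j)%:R in hc *; set L := (size W)%:R in hc *; set rho := (5 * r - 2) / 3 in hc IHm *.
  set g := G%:R in IHm *; set K := 7 + (pp r)%:~R in IHm hK *.
  have -> : c + g - rho * (L + m%:R) = (c - rho * L) + (g - rho * m%:R) by ring.
  apply: le_trans (ler_normD _ _) _.
  set lm := (1 + trunc_log 2 m)%:R in IHm Hl; set ln := (1 + trunc_log 2 n)%:R in Hl *.
  have : 0 <= lm by rewrite /lm ler0n.
  nra.
have Hm1 : (n - size W >= size W)%N by lia.
rewrite take_cat drop_cat ltnNge H1 /= take_cat drop_cat ltnNge Hm1 /=.
set m := (n - size W - size W)%N.
have Hm : (m <= size T)%N by move: Hn; rewrite !size_cat; lia.
rewrite gcount_cat gcount_cat -catA.
rewrite (catA (take m T)) cat_take_drop.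
have [Y1 ->] := startWT r j (kd r j.+1) Z.
rewrite gcount_block TZ gcount_block.
have hg : (gcount (take m T) (drop m T ++ Z) <= m)%N.
  by apply: leq_trans (gcount_le _ _) _; rewrite size_take_min geq_minl.
set G := gcount _ _ in hg *.
have hg' : G%:R <= m%:R :> R by rewrite ler_nat.
have hg0 : 0 <= G%:R :> R by rewrite ler0n.
have hmT : m%:R <= 5 + (pp r)%:~R :> R.
  have := kd_le (j.+1) h1 h2; have : m%:R <= (size T)%:R :> R by rewrite ler_nat.
  rewrite sT natrD; lra.
have En : n%:R = (size W)%:R + (size W)%:R + m%:R :> R by rewrite -!natrD; congr (_%:R); lia.
rewrite !natrD En.
set c := (cnt r j)%:R in hc *; set L := (size W)%:R in hc *; set rho := (5 * r - 2) / 3 in hc hrho0 hrho1 *.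
set g := G%:R in hg' hg0 *; set K := 7 + (pp r)%:~R in hK *.
have -> : c + (c + g) - rho * (L + L + m%:R) = (c - rho * L) + ((c - rho * L) + (g - rho * m%:R)) by ring.
apply: le_trans (ler_normD _ _) _.
apply: le_trans (lerD (lexx _) (ler_normD _ _)) _.
have hgm : `|g - rho * m%:R| <= m%:R.
  rewrite ler_norml; apply/andP; split; have : 0 <= m%:R :> R by rewrite ler0n.
    nra.
  nra.
have : K <= K * (1 + trunc_log 2 n)%:R.
  rewrite -[X in X <= _]mulr1 ler_wpM2l //; first lra.
  by rewrite ler1n.
rewrite /K in hmT *; lra.
Qed.

Lemma sq_lg n : (0 < n)%N -> ((1 + trunc_log 2 n) * (1 + trunc_log 2 n) <= 8 * n)%N.
Proof.
move=> n0; have := trunc_logP (isT : (1 < 2)%N) n0.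
set l := trunc_log 2 n => hl.
suff : ((1 + l) * (1 + l) <= 8 * 2 ^ l)%N by move=> h; apply: leq_trans h _; rewrite leq_mul2l hl orbT.
elim: l {hl} => [|l IH] //.
rewrite expnS; case: l IH => [|[|l]] IH //.
move: IH; rewrite expnS; set a := (2 ^ l.+1)%N; nia.
Qed.

Lemma card_dev (R : realType) (r : R) n : 2 / 5 < r -> r < 1 ->
  `|(cardP (wprefix r n))%:R - (5 * r - 2) / 3 * n%:R|
   <= (11 + (pp r)%:~R) * (1 + trunc_log 2 n)%:R :> R.
Proof.
move=> h1 h2.
have hp : 1 <= (pp r)%:~R :> R by rewrite ler1z; exact: pp_ge1.
have := @main_dev _ r n h1 h2 n [::] (size_block_ge r n).
rewrite wprefix_take cardP_gcount.
set u := take n _; set c := drop n _ ++ _.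
have e1 := gcount_nil_le u c; have e2 := gcount_le4 u c.
have E1 : (gcount u [::])%:R <= (gcount u c)%:R :> R by rewrite ler_nat.
have E2 : (gcount u c)%:R <= (gcount u [::])%:R + 4 :> R.
  by rewrite -[4]/(4%:R) -natrD ler_nat.
have hl : 1 <= (1 + trunc_log 2 n)%:R :> R by rewrite ler1n.
set a := (gcount u c)%:R in E1 E2 *; set b := (gcount u [::])%:R in E1 E2 *.
set x := (5 * r - 2) / 3 * n%:R; set l := (1 + trunc_log 2 n)%:R in hl *.
set P := (pp r)%:~R in hp *.
rewrite !ler_norml => /andP[h3 h4]; apply/andP; split; nra.
Qed.

Unset Implicit Arguments. Set Strict Implicit.

Theorem lemma4p15 (R : realType) (r : R) (hr1 : 2 / 5 < r) (hr2 : r < 1) :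
  (fun n : nat => (cardP (wprefix r n))%:R / n%:R : R) @ \oo --> ((5 * r - 2) / 3 : R).
Proof.
apply/cvgrPdist_le => e e0.
pose M : R := 11 + (pp r)%:~R.
have hM : 1 <= M by have := pp_ge1 hr1 hr2; rewrite /M -(ler1z R); lra.
exists (Num.truncn (8 * M ^+ 2 / e ^+ 2)).+1 => // n /= hn.
have n0 : (0 < n)%N by case: n hn.
have hN : 8 * M ^+ 2 / e ^+ 2 < n%:R.
  rewrite -truncn_lt_nat //; apply: divr_ge0; [nra | nra].
have hN' : 8 * M ^+ 2 < e ^+ 2 * n%:R.
  move: hN; rewrite ltr_pdivrMr ?exprn_gt0 // => h; nra.
have hd := card_dev n hr1 hr2; rewrite -/M in hd.
have hsq : (1 + trunc_log 2 n)%:R * (1 + trunc_log 2 n)%:R <= 8 * n%:R :> R.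
  by rewrite -natrM -(natrM _ 8) ler_nat sq_lg.
have Npos : 0 < n%:R :> R by rewrite ltr0n.
have -> : (5 * r - 2) / 3 - (cardP (wprefix r n))%:R / n%:R
   = - (((cardP (wprefix r n))%:R - (5 * r - 2) / 3 * n%:R) / n%:R).
  by field; rewrite pnatr_eq0 -lt0n.
rewrite normrN normrM (@ger0_norm _ n%:R^-1) ?invr_ge0 ?ler0n // ler_pdivrMr //.
apply: le_trans hd _.
set t := (1 + trunc_log 2 n)%:R in hsq *; set N0 := n%:R in hN' hsq Npos *.
have t0 : 0 <= t by rewrite /t ler0n.
have A1 : M ^+ 2 * (t * t) <= M ^+ 2 * (8 * N0) by rewrite ler_wpM2l // exprn_ge0 //; lra.
have A : (M * t) ^+ 2 < (e * N0) ^+ 2.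
  rewrite !exprMn; apply: le_lt_trans (_ : M ^+ 2 * (t * t) <= _) _; first by rewrite expr2.
  apply: le_lt_trans A1 _; rewrite expr2 mulrA; nra.
have B : 0 <= M * t by apply: mulr_ge0 => //; lra.
have C : 0 < e * N0 by apply: mulr_gt0.
rewrite !expr2 in A; nra.
Qed.
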